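(* For each $n\in\mathbb N$, let $\phi_n=(\phi_n(\theta),\theta\in\mathcal T)$ be a right-CE nonnegative supermartingale family, and suppose that the sequence $(\phi_n)$ is non-decreasing, i.e. for each $n$ and each $\theta\in\mathcal T$, $\phi_n(\theta)\le\phi_{n+1}(\theta)$ a.s. Then the family $\phi$ defined by $\phi(\theta)=\limsup_{n\to\infty}\phi_n(\theta)$, $\theta\in\mathcal T$, is a right-CE supermartingale family.
   Context: Filtered probability space $(\Omega,\mathcal F,(\mathcal F_t)_{0\le t\le T},P)$ satisfying the usual conditions, $\mathcal F=\mathcal F_T$, $\mathcal F_0$ trivial, $T\in(0,\infty)$. $\mathcal T$: stopping times valued in $[0,T]$. A family $\phi=(\phi(\theta),\theta\in\mathcal T)$ of $\overline{\mathbb R}$-valued random variables is admissible if each $\phi(\theta)$ is $\mathcal F_\theta$-measurable and $\phi(\theta)=\phi(\theta')$ a.s. on $\{\theta=\theta'\}$. An admissible $\phi$ with $E[\operatorname{ess\,sup}_\theta\phi(\theta)^-]<\infty$ is a supermartingale family if $E[\phi(\theta)\mid\mathcal F_{\theta'}]\le\phi(\theta')$ a.s. whenever $\theta\ge\theta'$ a.s. An admissible $\phi$ is right-CE if for all $\theta\in\mathcal T$ and all sequences $(\theta_n)\subset\mathcal T$ with $\theta_n\downarrow\theta$, $E[\phi(\theta)]=\lim_nE[\phi(\theta_n)]$. *)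

(* Defs.v *)
From HB Require Import structures.
From mathcomp Require Import all_boot all_order all_algebra.
From mathcomp Require Import all_classical all_reals all_analysis measurable_realfun.
Set Implicit Arguments. Unset Strict Implicit. Unset Printing Implicit Defensive.
Import Order.TTheory GRing.Theory Num.Theory numFieldNormedType.Exports.
Local Open Scope classical_set_scope.
Local Open Scope ring_scope.

Section Defs.
Context {d : measure_display} {T : measurableType d} {R : realType}.
Variable (P : probability T R).

Definition usual_filtration (Tm : R) (F : R -> set (set T)) : Prop :=
  (forall t, 0 <= t <= Tm -> sigma_algebra setT (F t)
                 /\ F t `<=` measurable) /\
      (forall s t, 0 <= s -> s <= t -> t <= Tm -> F s `<=` F t) /\
      (forall t, 0 <= t -> t < Tm ->
          F t = \bigcap_(s in [set s | t < s <= Tm]) F s) /\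
      (forall N : set T, P.-negligible N -> F 0 N) /\
      F Tm = measurable /\
      (forall A, F 0 A -> P A = 0%E \/ P A = 1%E).

Definition stopping_time (Tm : R) (F : R -> set (set T)) (th : T -> R) : Prop :=
  (forall x, 0 <= th x <= Tm) /\
  (forall t, 0 <= t <= Tm -> F t [set x | th x <= t]).

Definition F_at (Tm : R) (F : R -> set (set T)) (th : T -> R) : set (set T) :=
  [set A | measurable A /\
           forall t, 0 <= t <= Tm -> F t (A `&` [set x | th x <= t])].

Definition meas_wrt (G : set (set T)) (f : T -> \bar R) : Prop :=
  forall B : set (\bar R), measurable B -> G (f @^-1` B).

Definition cond_exp_version (G : set (set T)) (X Y : T -> \bar R) : Prop :=
  meas_wrt G Y /\
  forall A, G A -> (\int[P]_(x in A) Y x = \int[P]_(x in A) X x)%E.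

Definition is_esssup (I : Type) (S : I -> Prop) (X : I -> T -> \bar R)
    (Z : T -> \bar R) : Prop :=
  measurable_fun setT Z /\
  (forall i, S i -> {ae P, forall x, (X i x <= Z x)%E}) /\
  (forall Z' : T -> \bar R, measurable_fun setT Z' ->
     (forall i, S i -> {ae P, forall x, (X i x <= Z' x)%E}) ->
     {ae P, forall x, (Z x <= Z' x)%E}).

Definition admissible (Tm : R) (F : R -> set (set T))
    (phi : (T -> R) -> T -> \bar R) : Prop :=
  (forall th, stopping_time Tm F th -> meas_wrt (F_at Tm F th) (phi th)) /\
  (forall th th', stopping_time Tm F th -> stopping_time Tm F th' ->
     {ae P, forall x, th x = th' x -> phi th x = phi th' x}).

Definition supermartingale_family (Tm : R) (F : R -> set (set T))
    (phi : (T -> R) -> T -> \bar R) : Prop :=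
  [/\ admissible Tm F phi,
      (exists Z, is_esssup (stopping_time Tm F)
                   (fun th x => maxe (- phi th x)%E 0%E) Z
                 /\ (\int[P]_x Z x < +oo)%E)
    & (forall th th', stopping_time Tm F th -> stopping_time Tm F th' ->
         {ae P, forall x, th' x <= th x} ->
         exists Y, cond_exp_version (F_at Tm F th') (phi th) Y /\
                   {ae P, forall x, (Y x <= phi th' x)%E})].

Definition right_CE (Tm : R) (F : R -> set (set T))
    (phi : (T -> R) -> T -> \bar R) : Prop :=
  admissible Tm F phi /\
  forall (th : T -> R) (ths : nat -> T -> R),
    stopping_time Tm F th -> (forall n, stopping_time Tm F (ths n)) ->
    (forall x, nonincreasing_seq (fun n => ths n x)) ->
    (forall x, (fun n => ths n x) @ \oo --> th x) ->
    (fun n => (\int[P]_x phi (ths n) x)%E) @ \oo --> (\int[P]_x phi th x)%E.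

End Defs.

(* Main.v *)
Require Import Defs.
From HB Require Import structures.
From mathcomp Require Import all_boot all_order all_algebra.
From mathcomp Require Import all_classical all_reals all_analysis measurable_realfun.
From mathcomp Require Import lra.
Import Order.TTheory GRing.Theory Num.Theory numFieldNormedType.Exports.
Local Open Scope classical_set_scope.
Local Open Scope ring_scope.
Set Implicit Arguments. Unset Strict Implicit. Unset Printing Implicit Defensive.

Section aux.
Context d (T : measurableType d) (R : realType) (P : probability T R).
Local Open Scope ereal_scope.

Lemma meas_wrt_mfun (G : set (set T)) (f : T -> \bar R) :
  G `<=` measurable -> meas_wrt G f -> measurable_fun setT f.
Proof. by move=> GM mf _ B mB; rewrite setTI; exact/GM/mf. Qed.

Lemma meas_wrt_g (G : set (set T)) (f : T -> \bar R) : sigma_algebra setT G ->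
  meas_wrt G f <-> @measurable_fun _ _ (g_sigma_algebraType G) (\bar R) setT f.
Proof.
move=> sG; have E := measurable_g_measurableTypeE sG.
split => [mf _ B mB|mf B mB].
  rewrite setTI; rewrite E; exact: mf.
have := mf measurableT B mB; rewrite setTI E; exact.
Qed.

Lemma ae_test (Q : T -> Prop) : {ae P, forall x, Q x} ->
  exists N, [/\ measurable N, P N = 0 & forall x, ~ N x -> Q x].
Proof.
move=> [N [mN PN sub]]; exists N; split => // x Nx.
apply: contrapT => Qx; exact: Nx (sub x Qx).
Qed.

Lemma meas_wrt_limsup (G : set (set T)) (f_ : nat -> T -> \bar R) :
  sigma_algebra setT G -> (forall n, meas_wrt G (f_ n)) ->
  meas_wrt G (fun x => limn_esup (f_^~ x)).
Proof.
move=> sG mf; apply/(meas_wrt_g _ sG).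
apply: (@measurable_fun_limn_esup _ (g_sigma_algebraType G)) => n.
exact/(meas_wrt_g _ sG).
Qed.

Lemma meas_wrt_patch (G : set (set T)) (f : T -> \bar R) (E : set T) :
  sigma_algebra setT G -> meas_wrt G f -> G E -> meas_wrt G (f \_ (~` E)).
Proof.
move=> sG mf GE; apply/(meas_wrt_g _ sG).
have mE : @measurable _ (g_sigma_algebraType G) (~` E).
  apply: measurableC; by rewrite (measurable_g_measurableTypeE sG).
apply/(measurable_restrictT _ mE).
apply: (@measurable_funS _ _ (g_sigma_algebraType G) _ setT) => //.
exact/(meas_wrt_g _ sG).
Qed.

Lemma integral_null (A N : set T) (f : T -> \bar R) :
  measurable A -> measurable N -> P N = 0 -> measurable_fun A f ->
  \int[P]_(x in A) f x = \int[P]_(x in A `&` ~` N) f x.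
Proof.
move=> mA mN PN mf; rewrite integral_mkcondr.
apply: ae_eq_integral => //.
  apply/(measurable_restrict _ (measurableC mN) mA).
  by apply: measurable_funS mf => // x [].
exists N; split => // x /= H; apply: contrapT => Nx; apply: H => Ax.
rewrite /patch; case: ifPn => // /negP; rewrite inE; contradiction.
Qed.

Lemma mct_ae (f : nat -> T -> \bar R) (A : set T) : measurable A ->
  (forall n, measurable_fun setT (f n)) ->
  {ae P, forall x, (forall n, 0 <= f n x) /\ nondecreasing_seq (f^~ x)} ->
  (fun n => \int[P]_(x in A) f n x) @ \oo --> \int[P]_(x in A) limn_esup (f^~ x)
  /\ nondecreasing_seq (fun n => \int[P]_(x in A) f n x).
Proof.
move=> mA mf /ae_test[N [mN PN good]].
have mD : measurable (A `&` ~` N) by apply: measurableI => //; exact: measurableC.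
have mfA n : measurable_fun A (f n) by exact: measurable_funS (mf n).
have mfD n : measurable_fun (A `&` ~` N) (f n) by exact: measurable_funS (mf n).
have mL : measurable_fun A (fun x => limn_esup (f^~ x)).
  by apply: measurable_fun_limn_esup.
rewrite (integral_null mA mN PN mL).
have -> : (fun n => \int[P]_(x in A) f n x) =
          (fun n => \int[P]_(x in A `&` ~` N) f n x).
  by apply/funext => n; rewrite (integral_null mA mN PN).
have g0 n x : (A `&` ~` N) x -> 0 <= f n x by move=> [_ /good []].
have gnd x : (A `&` ~` N) x -> nondecreasing_seq (f^~ x) by move=> [_ /good []].
split; last first.
  by move=> m n mn; apply: ge0_le_integral => // x Dx; [exact: g0|exact: gnd].
rewrite (@eq_integral _ _ _ _ _ (fun x => limn (f^~ x))).
  exact: cvg_monotone_convergence.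
move=> x /set_mem Dx; apply: is_cvg_limn_esupE.
exact: ereal_nondecreasing_is_cvgn (gnd x Dx).
Qed.

Lemma meas_wrt_cst (G : set (set T)) (c : \bar R) : sigma_algebra setT G ->
  meas_wrt G (cst c).
Proof. by move=> sG; apply/(meas_wrt_g _ sG); exact: measurable_cst. Qed.

Lemma meas_wrt_D (G : set (set T)) (f g : T -> \bar R) : sigma_algebra setT G ->
  meas_wrt G f -> meas_wrt G g -> meas_wrt G (f \+ g).
Proof.
move=> sG /(meas_wrt_g _ sG) mf /(meas_wrt_g _ sG) mg; apply/(meas_wrt_g _ sG).
exact: emeasurable_funD.
Qed.

Lemma G_lee (G : set (set T)) (f g : T -> \bar R) : sigma_algebra setT G ->
  meas_wrt G f -> meas_wrt G g -> G [set x | f x <= g x].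
Proof.
move=> sG /(meas_wrt_g _ sG) mf /(meas_wrt_g _ sG) mg.
rewrite -(measurable_g_measurableTypeE sG).
rewrite -[X in _ X]setTI; exact: measurable_lee.
Qed.

Lemma G_lte (G : set (set T)) (f g : T -> \bar R) : sigma_algebra setT G ->
  meas_wrt G f -> meas_wrt G g -> G [set x | f x < g x].
Proof.
move=> sG /(meas_wrt_g _ sG) mf /(meas_wrt_g _ sG) mg.
rewrite -(measurable_g_measurableTypeE sG).
rewrite -[X in _ X]setTI; exact: measurable_lte.
Qed.

Lemma int_ge0_ae (f : T -> \bar R) (A : set T) : measurable A ->
  measurable_fun setT f -> {ae P, forall x, 0 <= f x} ->
  0 <= \int[P]_(x in A) f x.
Proof.
move=> mA mf /ae_test[N [mN PN good]].
rewrite (integral_null mA mN PN); last exact: measurable_funS mf.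
by apply: integral_ge0 => x [_ /good].
Qed.

Lemma key (B : set T) (f g : T -> \bar R) (e : R) : measurable B ->
  measurable_fun B f -> measurable_fun B g -> (0 < e)%R ->
  (forall x, B x -> 0 <= g x) -> (forall x, B x -> g x + e%:E <= f x) ->
  \int[P]_(x in B) f x <= \int[P]_(x in B) g x ->
  \int[P]_(x in B) g x < +oo -> P B = 0.
Proof.
move=> mB mf mg e0 g0 gf fg gfin.
have : \int[P]_(x in B) (g x + (cst e%:E) x) <= \int[P]_(x in B) g x.
  apply: le_trans fg; apply: ge0_le_integral => //.
  - by move=> x Bx; rewrite adde_ge0 ?g0 //= lee_fin ltW.
  - by apply: emeasurable_funD => //; exact: measurable_cst.
have c0 : forall x, B x -> 0 <= cst e%:E x by move=> x _; rewrite /= lee_fin ltW.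
rewrite (ge0_integralD _ mB g0 mg c0 (measurable_cst _)) integral_cst //.
have g0' : 0 <= \int[P]_(x in B) g x by exact: integral_ge0.
have gfn : \int[P]_(x in B) g x \is a fin_num by rewrite ge0_fin_numE.
rewrite -[leRHS]adde0 leeD2lE // pmule_rle0 ?lte_fin // => H.
by apply/eqP; rewrite eq_le measure_ge0 andbT.
Qed.

Lemma le_limn_esup (u v : (\bar R)^nat) : (forall n, u n <= v n) ->
  limn_esup u <= limn_esup v.
Proof.
move=> uv; rewrite !limn_esup_lim; apply: lee_lim.
- exact: is_cvg_esups.
- exact: is_cvg_esups.
apply: nearW => n; apply: ge_ereal_sup => _ [k /= nk <-].
by apply: le_trans (uv k) _; apply: ereal_sup_ubound; exists k.
Qed.

Lemma exists_inv (z : R) : (0 < z)%R -> exists m : nat, (m.+1%:R^-1 <= z)%R.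
Proof.
move=> z0; have zi0 : (0 <= z^-1)%R by rewrite invr_ge0 ltW.
have := archi_boundP zi0; set b := Num.Def.archi_bound _ => hb.
exists b; rewrite invf_ple ?posrE ?ltr0Sn //.
by apply: ltW; apply: lt_le_trans hb _; rewrite ler_nat.
Qed.

Lemma cover_neg (v : \bar R) : v < 0 -> exists k : nat, v + (k.+1%:R^-1)%:E <= 0.
Proof.
case: v => [r||]; [|by rewrite ltNge le0y|by move=> _; exists 0%N; exact: leNye].
rewrite lte_fin => r0; have r0' : (0 < - r)%R by rewrite oppr_gt0.
have [m hm] := exists_inv r0'.
by exists m; rewrite -EFinD lee_fin addrC -lerBrDr sub0r.
Qed.

Lemma cover_lt (y z : \bar R) : 0 <= y -> y < z ->
  exists m k : nat, y <= (k%:R)%:E /\ y + (m.+1%:R^-1)%:E <= z.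
Proof.
case: y => [r| |]; [|by move=> _; rewrite ltNge leey|by rewrite leeNy_eq].
rewrite lee_fin => r0 rz.
have [k hk] : exists k : nat, (r <= k%:R)%R.
  by exists (Num.Def.archi_bound r); apply: ltW; exact: archi_boundP.
case: z rz => [s||] //.
- rewrite lte_fin => rs; have rs' : (0 < s - r)%R by rewrite subr_gt0.
  have [m hm] := exists_inv rs'.
  exists m, k; split; first by rewrite lee_fin.
  by rewrite -EFinD lee_fin addrC -lerBrDr.
- by move=> _; exists 0%N, k; split; [rewrite lee_fin|exact: leey].
Qed.
End aux.

Section prob.
Context d (T : measurableType d) (R : realType) (P : probability T R).
Variables (Tm : R) (F : R -> set (set T)) (phin : nat -> (T -> R) -> T -> \bar R).
Hypothesis Tm0 : 0 < Tm.
Hypothesis uF : usual_filtration P Tm F.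
Local Notation ST := (stopping_time Tm F).

Lemma gE (G : set (set T)) (A : set T) : sigma_algebra setT G ->
  G A <-> @measurable _ (g_sigma_algebraType G) A.
Proof. by move=> sG; rewrite (measurable_g_measurableTypeE sG). Qed.

Lemma Ft_sigma t : 0 <= t <= Tm -> sigma_algebra setT (F t).
Proof. by case: uF => H _ /H []. Qed.

Lemma Fat_sigma th : ST th -> sigma_algebra setT (F_at Tm F th).
Proof.
move=> [th01 thF]; split.
- split; first exact: measurable0.
  by move=> t t01; rewrite set0I; apply/(gE _ (Ft_sigma t01)); exact: measurable0.
- move=> A [mA HA]; split; first exact: measurableD.
  move=> t t01; have sG := Ft_sigma t01; apply/(gE _ sG).
  have -> : (setT `\` A) `&` [set x | th x <= t] =
            [set x | th x <= t] `\` (A `&` [set x | th x <= t]).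
    by apply/seteqP; split => x /=; [move=> [[_ nA] tx]; split => // -[]|
       move=> [tx nA]; split => //; split => // Ax; exact: nA].
  apply: measurableD; apply/(gE _ sG); [exact: thF|exact: HA].
- move=> A HA; split; first by apply: bigcupT_measurable => k; case: (HA k).
  move=> t t01; have sG := Ft_sigma t01; apply/(gE _ sG).
  rewrite setI_bigcupl; apply: bigcupT_measurable => k.
  by apply/(gE _ sG); case: (HA k) => _; exact.
Qed.

Lemma Fat_meas th : F_at Tm F th `<=` measurable.
Proof. by move=> A []. Qed.

Lemma Fat_setT th : ST th -> F_at Tm F th setT.
Proof. by move=> [_ thF]; split => // t t01; rewrite setTI; exact: thF. Qed.

Lemma ST0 : ST (fun _ => 0%R).
Proof.
split => [x|t /andP[t0 tm]]; first by rewrite lexx ltW.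
have sG := @Ft_sigma t ltac:(by rewrite t0 tm).
have -> : [set x : T | (0 <= t)%R] = setT by apply/seteqP; split.
by apply/(gE _ sG); exact: measurableT.
Qed.


Hypothesis rce : forall n, right_CE P Tm F (phin n).
Hypothesis smf : forall n, supermartingale_family P Tm F (phin n).
Hypothesis pos : forall n th, ST th -> {ae P, forall x, (0 <= phin n th x)%E}.
Hypothesis mono : forall n th, ST th ->
     {ae P, forall x, (phin n th x <= phin n.+1 th x)%E}.
Local Open Scope ereal_scope.

Lemma adm_n n : admissible P Tm F (phin n).
Proof. by case: (smf n). Qed.

Lemma mphin n th : ST th -> measurable_fun setT (phin n th).
Proof. move=> s; exact: meas_wrt_mfun (@Fat_meas th) ((adm_n n).1 th s). Qed.

Lemma ae_good th : ST th -> {ae P, forall x, (forall n, 0 <= phin n th x)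
   /\ nondecreasing_seq (fun n => phin n th x)}.
Proof.
move=> s; have h1 := ae_foralln (fun n => pos n s).
have h2 := ae_foralln (fun n => mono n s).
by apply: filterS2 h1 h2 => x h1 h2; split => //; exact/nondecreasing_seqP.
Qed.

Lemma adm_phi : admissible P Tm F (fun th x => limn_esup (fun n => phin n th x)).
Proof.
split.
  move=> th s; apply: meas_wrt_limsup (Fat_sigma s) _ => n; exact: (adm_n n).1.
move=> th th' s s'.
have := ae_foralln (fun n => (adm_n n).2 th th' s s').
apply: filterS => x H e; congr limn_esup; apply/funext => n; exact: H.
Qed.

Lemma limsup_nd_ge0 (u : (\bar R)^nat) : (forall n, 0 <= u n) ->
  nondecreasing_seq u -> 0 <= limn_esup u.
Proof.
move=> u0 nd; rewrite is_cvg_limn_esupE; last exact: ereal_nondecreasing_is_cvgn.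
by apply: lime_ge; [exact: ereal_nondecreasing_is_cvgn|exact: nearW].
Qed.

Lemma phi_ge0 th : ST th ->
  {ae P, forall x, 0 <= limn_esup (fun n => phin n th x)}.
Proof. by move=> s; apply: filterS (ae_good s) => x [h1 h2]; exact: limsup_nd_ge0. Qed.

Lemma int_le_ae_ge0 (Y f : T -> \bar R) : measurable_fun setT Y ->
  measurable_fun setT f -> {ae P, forall x, 0 <= f x} ->
  {ae P, forall x, Y x <= f x} -> \int[P]_x Y x <= \int[P]_x f x.
Proof.
move=> mY mf f0 Yf.
have -> : \int[P]_x f x = \int[P]_x f^\+ x.
  apply: ae_eq_integral => //; first exact: measurable_funepos.
  apply: filterS f0 => x f0 _; rewrite funeposE; apply/esym/max_l; exact: f0.
rewrite integralE; apply: (@le_trans _ _ (\int[P]_x Y^\+ x)).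
  rewrite -[leRHS]sube0; apply: leeB => //; exact: integral_ge0.
apply: ae_ge0_le_integral => //; try exact: measurable_funepos.
apply: filterS Yf => x Yf _; rewrite !funeposE; exact: le_max2.
Qed.

Lemma sm_int k th th' : ST th -> ST th' -> {ae P, forall x, (th' x <= th x)%R} ->
  \int[P]_x phin k th x <= \int[P]_x phin k th' x.
Proof.
move=> s s' le; case: (smf k) => _ _ /(_ th th' s s' le) [Y [[mY hY] Yle]].
rewrite -(hY setT (Fat_setT s')).
apply: int_le_ae_ge0 => //; [exact: meas_wrt_mfun (@Fat_meas th') mY|
  exact: mphin|exact: pos].
Qed.


Lemma int_phi th A : ST th -> measurable A ->
  (fun n => \int[P]_(x in A) phin n th x) @ \oo -->
     \int[P]_(x in A) limn_esup (fun n => phin n th x)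
  /\ nondecreasing_seq (fun n => \int[P]_(x in A) phin n th x).
Proof. by move=> s mA; apply: mct_ae => //; [move=> n; exact: mphin|exact: ae_good]. Qed.

Lemma nd_lim_sup (u : (\bar R)^nat) l : nondecreasing_seq u -> u @ \oo --> l ->
  l = ereal_sup (range u).
Proof.
move=> nd ul; rewrite -(cvg_lim _ ul) //.
by rewrite (cvg_lim _ (ereal_nondecreasing_cvgn nd)).
Qed.

Lemma rce_phi : right_CE P Tm F (fun th x => limn_esup (fun n => phin n th x)).
Proof.
split; first exact: adm_phi.
move=> th ths s ss noni cv.
pose a k n := \int[P]_x phin k (ths n) x.
have ha k : a k @ \oo --> \int[P]_x phin k th x by exact: (rce k).2.
have nda k : nondecreasing_seq (a k).
  apply/nondecreasing_seqP => n; apply: sm_int => //.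
  by apply: aeW => x; exact: noni.
have hA n := int_phi (ss n) (@measurableT _ T).
have hB := int_phi s (@measurableT _ T).
pose A n := \int[P]_x limn_esup (fun k => phin k (ths n) x).
have EA n : A n = ereal_sup (range (fun k => a k n)).
  by apply: nd_lim_sup; [exact: (hA n).2|exact: (hA n).1].
have Eb k : \int[P]_x phin k th x = ereal_sup (range (a k)).
  exact: nd_lim_sup (nda k) (ha k).
have EB := nd_lim_sup hB.2 hB.1.
have ndA : nondecreasing_seq A.
  apply/nondecreasing_seqP => n; rewrite !EA; apply: ge_ereal_sup => _ [k _ <-].
  apply: (@le_trans _ _ (a k n.+1)); first exact: nda.
  by apply: ereal_sup_ubound; exists k.
rewrite -/(A _).
suff -> : \int[P]_x limn_esup (fun n => phin n th x) = ereal_sup (range A).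
  exact: ereal_nondecreasing_cvgn.
rewrite EB; apply/eqP; rewrite eq_le; apply/andP; split.
  apply: ge_ereal_sup => _ [k _ <-]; rewrite Eb.
  apply: ge_ereal_sup => _ [n _ <-].
  apply: (@le_trans _ _ (A n)); last by apply: ereal_sup_ubound; exists n.
  by rewrite EA; apply: ereal_sup_ubound; exists k.
apply: ge_ereal_sup => _ [n _ <-]; rewrite EA.
apply: ge_ereal_sup => _ [k _ <-].
apply: (@le_trans _ _ (\int[P]_x phin k th x)); last first.
  by apply: ereal_sup_ubound; exists k.
by rewrite Eb; apply: ereal_sup_ubound; exists n.
Qed.

Lemma ce_phi th th' : ST th -> ST th' -> {ae P, forall x, (th' x <= th x)%R} ->
  exists Y, cond_exp_version P (F_at Tm F th')
      (fun x => limn_esup (fun n => phin n th x)) Y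
    /\ {ae P, forall x, Y x <= limn_esup (fun n => phin n th' x)}.
Proof.
move=> s s' le.
pose G := F_at Tm F th'.
have sG : sigma_algebra setT G := Fat_sigma s'.
have GM : G `<=` measurable := @Fat_meas th'.
have : forall n, exists Y, cond_exp_version P G (phin n th) Y /\
    {ae P, forall x, Y x <= phin n th' x}.
  by move=> n; case: (smf n) => _ _ /(_ th th' s s' le).
move=> /choice[Yn HY].
have mYG n : meas_wrt G (Yn n) by case: (HY n) => -[].
have hY n A : G A -> \int[P]_(x in A) Yn n x = \int[P]_(x in A) phin n th x.
  by case: (HY n) => -[_ h] _; exact: h.
have mY n : measurable_fun setT (Yn n) := meas_wrt_mfun GM (mYG n).
have GP A : G A -> @measurable _ (g_sigma_algebraType G) A by move/(gE _ sG).
have PG A : @measurable _ (g_sigma_algebraType G) A -> G A by move/(gE _ sG).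
have neg0 n : P.-negligible [set x | Yn n x < 0].
  pose B k := [set x | Yn n x + (k.+1%:R^-1)%:E <= 0].
  have GB k : G (B k).
    by apply: G_lee => //; [apply: meas_wrt_D => //; exact: meas_wrt_cst|
      exact: meas_wrt_cst].
  apply: (@negligibleS _ _ _ _ (\bigcup_k B k)).
    by move=> x /= /cover_neg [k hk]; exists k.
  apply: negligible_bigcup => k; apply/negligibleP; first exact: GM.
  have mB := GM _ (GB k).
  have Yle0 x : B k x -> Yn n x <= 0.
    move=> Bx; apply: le_trans Bx; rewrite -[X in X <= _]adde0 leeD2l //.
  apply: (@key _ _ _ P (B k) (fun x => - Yn n x) (cst 0) (k.+1%:R^-1)) => //.
  - by apply: measurableT_comp => //; exact: measurable_funS (mY n).
  - move=> x Bx; rewrite /= add0e leeNr; move: Bx; rewrite /B /= -leeBrDr //.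
    by rewrite sub0e.
  - rewrite integral0 -[leLHS]oppeK -integral_ge0N; last first.
      by move=> x Bx; rewrite leeNr oppe0; exact: Yle0.
    under eq_integral do rewrite oppeK.
    rewrite hY // leeNl oppe0; apply: int_ge0_ae => //; [exact: mphin|exact: pos].
  - by rewrite integral0 ltry.
have lt0 n : P.-negligible [set x | Yn n.+1 x < Yn n x].
  pose D m k := [set x | 0 <= Yn n.+1 x] `&` [set x | Yn n.+1 x <= (k%:R)%:E]
    `&` [set x | Yn n.+1 x + (m.+1%:R^-1)%:E <= Yn n x].
  have GD m k : G (D m k).
    apply: PG; apply: measurableI; [apply: measurableI|]; apply: GP.
    - exact: (G_lee (G:=G) (f:=cst 0) (g:=Yn n.+1) sG (meas_wrt_cst _ sG) (mYG _)).
    - exact: (G_lee (G:=G) (f:=Yn n.+1) (g:=cst _) sG (mYG _) (meas_wrt_cst _ sG)).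
    - apply: (G_lee (G:=G) (f:=Yn n.+1 \+ cst _) (g:=Yn n) sG) => //.
      exact: meas_wrt_D (mYG _) (meas_wrt_cst _ sG).
  apply: (@negligibleS _ _ _ _
     ([set x | Yn n.+1 x < 0] `|` \bigcup_m \bigcup_k D m k)).
    move=> x /= lt; have [h|h] := leP 0 (Yn n.+1 x); last by left.
    right; have [m [k [h1 h2]]] := cover_lt h lt.
    by exists m => //; exists k.
  apply: negligibleU; first exact: neg0.
  apply: negligible_bigcup => m; apply: negligible_bigcup => k.
  have mD := GM _ (GD m k).
  apply/negligibleP => //.
  apply: (@key _ _ _ P (D m k) (Yn n) (Yn n.+1) (m.+1%:R^-1)) => //.
  - exact: measurable_funS (mY n).
  - exact: measurable_funS (mY n.+1).
  - by move=> x [[]].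
  - by move=> x [].
  - rewrite !hY //; exact: (int_phi s mD).2 _ _ (leqnSn n).
  - apply: (@le_lt_trans _ _ (\int[P]_(x in D m k) cst (k%:R)%:E x)).
      apply: ge0_le_integral => //.
      + by move=> x [[]].
      + exact: measurable_funS (mY n.+1).
      + by move=> x [[_]].
    rewrite integral_cst //.
    apply: lte_mul_pinfty => //.
    by apply: le_lt_trans (probability_le1 P mD) _; exact: ltry.
pose E := \bigcup_n ([set x | Yn n x < 0] `|` [set x | Yn n.+1 x < Yn n x]).
have GE : G E.
  apply: PG; apply: bigcupT_measurable => n; apply: measurableU; apply: GP.
  - exact: (G_lte (G:=G) (f:=Yn n) (g:=cst 0) sG (mYG _) (meas_wrt_cst _ sG)).
  - exact: (G_lte (G:=G) (f:=Yn n.+1) (g:=Yn n) sG (mYG _) (mYG _)).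
have mE := GM _ GE.
have PE : P E = 0.
  apply/negligibleP => //; apply: negligible_bigcup => n.
  exact: negligibleU (neg0 n) (lt0 n).
pose Yc n := Yn n \_ (~` E).
have mYcG n : meas_wrt G (Yc n) := meas_wrt_patch sG (mYG n) GE.
have mYc n : measurable_fun setT (Yc n) := meas_wrt_mfun GM (mYcG n).
have Yc_good x : (forall n, 0 <= Yc n x) /\ nondecreasing_seq (Yc ^~ x).
  have [nEx|Ex] := boolP (x \in ~` E); last first.
    have e0 n : Yc n x = 0 by rewrite /Yc /patch (negbTE Ex).
    by split => [n|m n _]; rewrite ?e0.
  have eY n : Yc n x = Yn n x by rewrite /Yc /patch nEx.
  move/set_mem: nEx => nEx.
  split.
    move=> n; rewrite eY leNgt; apply/negP => h; apply: nEx; exists n => //; by left.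
  apply/nondecreasing_seqP => n; rewrite !eY leNgt; apply/negP => h.
  by apply: nEx; exists n => //; right.
exists (fun x => limn_esup (Yc ^~ x)); split; first split.
- exact: meas_wrt_limsup sG mYcG.
- move=> A GA; have mA := GM _ GA.
  have h1 := (mct_ae (P:=P) mA mYc (aeW _ Yc_good)).1.
  have h2 := (int_phi s mA).1.
  have eq : (fun n => \int[P]_(x in A) Yc n x) =
            (fun n => \int[P]_(x in A) phin n th x).
    apply/funext => n; rewrite -hY //.
    rewrite (integral_null mA mE PE); last exact: measurable_funS (mYc n).
    rewrite [RHS](integral_null mA mE PE); last exact: measurable_funS (mY n).
    apply: eq_integral => x /set_mem [_ nEx]; rewrite /Yc /patch ifT //.
    exact/mem_set.
  rewrite eq in h1.
  by rewrite -(cvg_lim _ h1) // (cvg_lim _ h2).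
- have h := ae_foralln (fun n => (HY n).2).
  have hE : {ae P, forall x, ~ E x}.
    by exists E; split => // x /= /contrapT.
  apply: filterS2 h hE => x h nEx.
  apply: le_limn_esup => n; rewrite /Yc /patch ifT; [exact: h|exact/mem_set].
Qed.

End prob.

Theorem lemma3p6 (d : measure_display) (T : measurableType d) (R : realType)
    (P : probability T R) (Tm : R) (F : R -> set (set T))
    (phin : nat -> (T -> R) -> T -> \bar R) :
  0 < Tm ->
  usual_filtration P Tm F ->
  (forall n, right_CE P Tm F (phin n)) ->
  (forall n, supermartingale_family P Tm F (phin n)) ->
  (forall n th, stopping_time Tm F th -> {ae P, forall x, (0 <= phin n th x)%E}) ->
  (forall n th, stopping_time Tm F th ->
     {ae P, forall x, (phin n th x <= phin n.+1 th x)%E}) ->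
  right_CE P Tm F (fun th x => limn_esup (fun n => phin n th x)) /\
  supermartingale_family P Tm F (fun th x => limn_esup (fun n => phin n th x)).
Proof.
move=> Tm0 uF rce smf pos mono; split.
  exact: rce_phi.
split.
- exact: adm_phi.
- exists (cst 0%E); split; last by rewrite integral0 ltry.
  split; first exact: measurable_cst.
  split.
  + move=> th s; apply: filterS (phi_ge0 pos mono s) => x h.
    by rewrite ge_max lexx andbT leeNl oppe0.
  + move=> Z' mZ' H; apply: filterS (H _ (ST0 Tm0 uF)) => x h.
    by apply: le_trans h; rewrite le_max lexx orbT.
- move=> th th' s s' le; exact: (ce_phi uF smf pos mono s s' le).
Qed.
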